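(* Let $f: \mathbb{T} \to \mathbb{T}$ be as in the context. Assume $\rho(f) = p/q$, with $p,q$ coprime positive integers, or $p=0$, $q=1$. If $q$ is even then $f^q=\mathrm{id}$, that is, all orbits are periodic with primitive period $q$; moreover, $a_0$ and $a_1$ are in the same periodic orbit. If $q$ is odd then, for any non-degenerate interval $I \subset \mathbb{T}$, $f^q|_I \ne \mathrm{id}|_I$; also $a_0$ and $a_1$ are not in the same periodic orbit.
   Context: Setting: the internal-wave billiard (unit-speed point particle, reflected so that angles of incident and reflected velocities with the vertical are equal) in a rectangular trapezoid of height $1/2$ with horizontal bases, vertical left leg, shorter base of length $\ell>0$, and slanted leg making angle $\alpha$ as in the paper's convention; the initial direction $\theta$ (angle with the vertical, particle starting on the vertical leg) satisfies $\alpha<\theta<\pi/2$ and $\theta\ge\arctan(2\ell+\tan\alpha)$. $f:\mathbb{T}\to\mathbb{T}$ ($\mathbb{T}=\mathbb{R}/\mathbb{Z}\cong[-1/2,1/2)$) is the first-return map of the unfolded linear flow to a horizontal cross-section of length 1; it is an orientation-preserving piecewise-linear circle homeomorphism whose derivative takes only the values $\Lambda$ and $\Lambda^{-1}$, $\Lambda=\sin(\theta+\alpha)/\sin(\theta-\alpha)>1$. Its two break points are $a_0=(\tan\theta-2\ell)/(2\tan\theta)\in(0,1/2)$ (where $f'$ jumps up from $\Lambda^{-1}$ to $\Lambda$) and $a_1=-(2\ell+\tan\alpha)/(2\tan\theta)\in(-1/2,0)$ (where $f'$ jumps down), with $f(a_j)=-a_j$. $\rho(f)\in[0,1)$ is the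 Poincaré rotation number. *)

(* Defs.v *)
From Stdlib Require Import Reals Lra Lia Arith ZArith.
Open Scope R_scope.

(* Points of the circle T = R/Z are represented by real numbers;
   x and y denote the same point of T iff x - y is an integer. *)
Definition is_int (y : R) : Prop := exists z : Z, y = IZR z.
Definition same_pt (x y : R) : Prop := is_int (x - y).

(* floor, via Stdlib's Int_part (= up r - 1, which is the floor) *)
Definition floorR (r : R) : R := IZR (Int_part r).

Definition Lam (theta alpha : R) : R := sin (theta + alpha) / sin (theta - alpha).
Definition a0 (theta ell : R) : R := (tan theta - 2 * ell) / (2 * tan theta).
Definition a1 (theta alpha ell : R) : R := - (2 * ell + tan alpha) / (2 * tan theta).

(* The lift F : R -> R of f on the fundamental domain [a1, a1 + 1):
   slope Lam^-1 on [a1, a0], slope Lam on [a0, a1 + 1], F(a1) = -a1,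
   F(a0) = 1 - a0 (= -a0 in T); extended by F(x + n) = F(x) + n. *)
Definition F_piece (theta alpha ell y : R) : R :=
  let L := Lam theta alpha in
  let b0 := a0 theta ell in
  let b1 := a1 theta alpha ell in
  if Rle_dec y b0 then - b1 + (y - b1) / L
  else 1 - b0 + L * (y - b0).

Definition F (theta alpha ell x : R) : R :=
  let n := floorR (x - a1 theta alpha ell) in
  F_piece theta alpha ell (x - n) + n.

Definition Fiter (theta alpha ell : R) (n : nat) (x : R) : R :=
  Nat.iter n (F theta alpha ell) x.

(* Poincare rotation number rho(f) in [0,1): fractional part of
   lim_n (F^n(x) - x)/n  (taken at x = 0; independent of x and of the lift). *)
Definition rotation_number (theta alpha ell rho : R) : Prop :=
  exists r : R,
    Un_cv (fun n => (Fiter theta alpha ell n 0 - 0) / INR n) r /\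
    rho = r - floorR r.

Definition admissible (theta alpha ell : R) : Prop :=
  0 < ell /\ 0 < alpha /\ alpha < theta /\ theta < PI / 2 /\
  atan (2 * ell + tan alpha) <= theta.

(* Main.v *)
Require Import Defs.
From Stdlib Require Import Reals Lra Lia Arith ZArith Znumtheory Classical.
Open Scope R_scope.

Lemma fl_spec r : floorR r <= r < floorR r + 1.
Proof. unfold floorR. destruct (base_Int_part r). lra. Qed.

Lemma fl_unique (z : Z) r : IZR z <= r < IZR z + 1 -> floorR r = IZR z.
Proof.
  intros [H1 H2]. destruct (fl_spec r) as [H3 H4]. unfold floorR in *.
  assert (Int_part r = z)%Z; [|subst; auto].
  assert (A: (Int_part r < z + 1)%Z) by (apply lt_IZR; rewrite plus_IZR; lra).
  assert (B: (z < Int_part r + 1)%Z) by (apply lt_IZR; rewrite plus_IZR; lra).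
  lia.
Qed.

Lemma fl_int r : exists z, floorR r = IZR z.
Proof. exists (Int_part r). reflexivity. Qed.

Lemma fl_shift r (k : Z) : floorR (r + IZR k) = floorR r + IZR k.
Proof.
  destruct (fl_int r) as [z Hz]. pose proof (fl_spec r). rewrite Hz in *.
  rewrite <- plus_IZR. apply fl_unique. rewrite plus_IZR. lra.
Qed.

Lemma div_nonneg a b : 0 <= a -> 0 < b -> 0 <= a / b.
Proof. intros. unfold Rdiv. apply Rmult_le_pos; [lra| left; apply Rinv_0_lt_compat; lra]. Qed.

Lemma lip_cont (f : R -> R) K : 0 < K -> (forall x y, Rabs (f x - f y) <= K * Rabs (x - y)) -> continuity f.
Proof.
  intros HK Hf x. unfold continuity_pt, continue_in, limit1_in, limit_in. intros eps Heps.
  exists (eps / K). split; [apply Rdiv_lt_0_compat; lra|].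
  intros y [_ Hy]. simpl in *. unfold R_dist in *.
  eapply Rle_lt_trans; [apply Hf|].
  apply (Rmult_lt_compat_l K) in Hy; [|lra]. replace (K * (eps / K)) with eps in Hy by (field; lra). lra.
Qed.

Lemma sub_lim (w : nat -> R) r (n : nat) c C : Un_cv w r -> (0 < n)%nat -> 0 <= C ->
  (forall j, (0 < j)%nat -> Rabs (w (j * n)%nat - c) <= C / INR j) -> r = c.
Proof.
  intros Hw Hn HC Hj. destruct (Req_dec r c) as [e|ne]; auto. exfalso.
  set (e := Rabs (r - c) / 2).
  assert (He : 0 < e) by (unfold e; apply Rdiv_lt_0_compat; [apply Rabs_pos_lt; lra| lra]).
  destruct (Hw e He) as [N HN].
  destruct (archimed (C / e)) as [A _].
  set (j := (N + 1 + Z.to_nat (up (C / e)))%nat).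
  assert (Hj1 : (0 < j)%nat) by (unfold j; lia).
  assert (HjN : (j >= N)%nat) by (unfold j; lia).
  assert (Hjn : (j * n >= N)%nat).
  { unfold ge. eapply Nat.le_trans; [exact HjN|]. rewrite <- (Nat.mul_1_r j) at 1. apply Nat.mul_le_mono_l; lia. }
  specialize (HN _ Hjn). unfold R_dist in HN. specialize (Hj j Hj1).
  assert (HjC : C / e < INR j).
  { unfold j. rewrite !plus_INR. rewrite INR_IZR_INZ with (n := Z.to_nat _), Z2Nat.id.
    - pose proof (pos_INR N). simpl. lra.
    - apply le_IZR. assert (0 <= C / e) by (apply div_nonneg; lra). lra. }
  assert (C / INR j < e).
  { assert (0 < INR j) by (apply lt_0_INR; lia).
    apply (Rmult_lt_reg_r (INR j)); auto. unfold Rdiv. rewrite Rmult_assoc, Rinv_l by lra.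
    apply (Rmult_lt_compat_l e) in HjC; auto. unfold Rdiv in HjC. 
    replace (e * (C * / e)) with C in HjC by (field; lra). lra. }
  assert (Rabs (r - c) <= Rabs (r - w (j * n)%nat) + Rabs (w (j * n)%nat - c)).
  { replace (r - c) with ((r - w (j*n)%nat) + (w (j*n)%nat - c)) by ring. apply Rabs_triang. }
  rewrite (Rabs_minus_sym r (w (j*n)%nat)) in H0. unfold e in *. lra.
Qed.

Lemma lim_ge (w : nat -> R) r (n : nat) d : Un_cv w r -> (0 < n)%nat ->
  (forall j, (0 < j)%nat -> d <= w (j * n)%nat) -> d <= r.
Proof.
  intros Hw Hn Hj. destruct (Rle_or_lt d r) as [h|h]; auto. exfalso.
  destruct (Hw (d - r)) as [N HN]; [lra|].
  assert (HH : ((N+1) * n >= N)%nat) by (unfold ge; rewrite Nat.mul_add_distr_r; pose proof (Nat.le_0_l (N*n)); assert (N <= N * n)%nat by (rewrite <- (Nat.mul_1_r N) at 1; apply Nat.mul_le_mono_l; lia); lia).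
  specialize (HN ((N+1) * n)%nat HH). specialize (Hj (N+1)%nat ltac:(lia)).
  unfold R_dist in HN. apply Rabs_def2 in HN. lra.
Qed.

Lemma lim_le (w : nat -> R) r (n : nat) d : Un_cv w r -> (0 < n)%nat ->
  (forall j, (0 < j)%nat -> w (j * n)%nat <= d) -> r <= d.
Proof.
  intros Hw Hn Hj. destruct (Rle_or_lt r d) as [h|h]; auto. exfalso.
  destruct (Hw (r - d)) as [N HN]; [lra|].
  assert (HH : ((N+1) * n >= N)%nat) by (unfold ge; rewrite Nat.mul_add_distr_r; pose proof (Nat.le_0_l (N*n)); assert (N <= N * n)%nat by (rewrite <- (Nat.mul_1_r N) at 1; apply Nat.mul_le_mono_l; lia); lia).
  specialize (HN ((N+1) * n)%nat HH). specialize (Hj (N+1)%nat ltac:(lia)).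
  unfold R_dist in HN. apply Rabs_def2 in HN. lra.
Qed.

Lemma sup_closed (Fx : R -> Prop) x :
  (forall y, ~ Fx y -> exists d, 0 < d /\ forall w, Rabs (w - y) < d -> ~ Fx w) ->
  (exists z, z <= x /\ Fx z) ->
  exists u, u <= x /\ Fx u /\ forall w, u < w <= x -> ~ Fx w.
Proof.
  intros Hcl Hne. set (E := fun w => w <= x /\ Fx w).
  assert (Hb : bound E) by (exists x; intros w [Hw _]; auto).
  destruct (completeness E Hb Hne) as [u [Hub Hlub]].
  assert (Hux : u <= x) by (apply Hlub; intros w [Hw _]; auto).
  assert (Hu : Fx u).
  { destruct (classic (Fx u)) as [h|h]; auto. exfalso.
    destruct (Hcl u h) as [d [Hd Hw]].
    assert (u <= u - d / 2); [|lra].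
    apply Hlub. intros w [Hwx Hfw]. destruct (Rle_or_lt w (u - d/2)) as [h1|h1]; auto. exfalso.
    assert (w <= u) by (apply Hub; split; auto).
    apply (Hw w); auto. rewrite Rabs_left1; lra. }
  exists u. split; auto. split; auto. intros w [Hw1 Hw2] Hfw.
  assert (w <= u) by (apply Hub; split; auto). lra.
Qed.

Lemma inf_closed (Fx : R -> Prop) x :
  (forall y, ~ Fx y -> exists d, 0 < d /\ forall w, Rabs (w - y) < d -> ~ Fx w) ->
  (exists z, x <= z /\ Fx z) ->
  exists v, x <= v /\ Fx v /\ forall w, x <= w < v -> ~ Fx w.
Proof.
  intros Hcl [z [Hz1 Hz2]].
  destruct (sup_closed (fun w => Fx (- w)) (- x)) as [u [Hu1 [Hu2 Hu3]]].
  - intros y Hy. destruct (Hcl (- y) Hy) as [d [Hd Hw]]. exists d. split; auto.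
    intros w Hw'. apply Hw. replace (- w - - y) with (- (w - y)) by ring. rewrite Rabs_Ropp; auto.
  - exists (- z). split; [lra|]. rewrite Ropp_involutive; auto.
  - exists (- u). split; [lra|]. split; auto. intros w Hw. intros Hf. apply (Hu3 (- w)); [lra|].
    rewrite Ropp_involutive; auto.
Qed.

Section Abs.
Variables L b0 b1 : R.
Hypothesis HL : 1 < L.
Hypothesis Hb : b1 < b0.
Hypothesis Hrel : b0 - b1 = L * (1 - b0 + b1).

Definition FP (y : R) : R :=
  if Rle_dec y b0 then - b1 + (y - b1) / L else 1 - b0 + L * (y - b0).
Definition FF (x : R) : R :=
  let n := floorR (x - b1) in FP (x - n) + n.

Lemma Lpos : 0 < L. Proof. lra. Qed.
Lemma b0lt : b0 < b1 + 1.
Proof.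
  assert (0 < 1 - b0 + b1); [|lra].
  destruct (Rle_or_lt (1 - b0 + b1) 0) as [h|h]; auto.
  assert (L * (1 - b0 + b1) <= 0) by nra. lra.
Qed.
Lemma relL : (b0 - b1) / L = 1 - b0 + b1.
Proof. rewrite Hrel. field. lra. Qed.

Lemma FF_shift x (k : Z) : FF (x + IZR k) = FF x + IZR k.
Proof.
  unfold FF. replace (x + IZR k - b1) with ((x - b1) + IZR k) by ring.
  rewrite fl_shift. replace (x + IZR k - (floorR (x - b1) + IZR k)) with (x - floorR (x - b1)) by ring.
  ring.
Qed.

Lemma FF_p1 (n : Z) x : b1 + IZR n <= x <= b0 + IZR n ->
  FF x = - b1 + (x - IZR n - b1) / L + IZR n.
Proof.
  intros H. pose proof b0lt. unfold FF.
  assert (E : floorR (x - b1) = IZR n) by (apply fl_unique; lra).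
  rewrite E. unfold FP. destruct (Rle_dec (x - IZR n) b0); [ring| lra].
Qed.

Lemma FF_p2 (n : Z) x : b0 + IZR n <= x <= b1 + IZR n + 1 ->
  FF x = 1 - b0 + L * (x - IZR n - b0) + IZR n.
Proof.
  intros H. pose proof b0lt. pose proof relL.
  destruct (Req_dec x (b1 + IZR n + 1)) as [e|ne].
  - unfold FF. assert (E : floorR (x - b1) = IZR (n + 1)) by (apply fl_unique; rewrite plus_IZR; lra).
    rewrite E. unfold FP. rewrite plus_IZR. subst x.
    destruct (Rle_dec (b1 + IZR n + 1 - (IZR n + 1)) b0); [|lra].
    replace (b1 + IZR n + 1 - (IZR n + 1)) with b1 by ring.
    replace (L * (b1 + IZR n + 1 - IZR n - b0)) with (L * (1 - b0 + b1)) by ring.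
    rewrite <- Hrel. field. lra.
  - unfold FF. assert (E : floorR (x - b1) = IZR n) by (apply fl_unique; lra).
    rewrite E. unfold FP. destruct (Rle_dec (x - IZR n) b0).
    + assert (x = b0 + IZR n) by lra. subst x.
      replace (b0 + IZR n - IZR n) with b0 by ring.
      replace ((b0 - b1)/L) with (1 - b0 + b1) by (rewrite <- relL; auto). ring.
    + ring.
Qed.

Lemma cell x : exists n : Z, (b1 + IZR n <= x <= b0 + IZR n) \/ (b0 + IZR n <= x <= b1 + IZR n + 1).
Proof.
  destruct (fl_int (x - b1)) as [n Hn]. pose proof (fl_spec (x - b1)). rewrite Hn in H.
  exists n. destruct (Rle_or_lt x (b0 + IZR n)); [left|right]; lra.
Qed.

Lemma FF_inv x : FF (- FF x) = - x.
Proof.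
  pose proof b0lt. pose proof relL. pose proof Lpos.
  destruct (cell x) as [n [C1|C1]].
  - rewrite (FF_p1 n x C1).
    assert (D1 : 0 <= (x - IZR n - b1) / L) by (apply div_nonneg; lra).
    assert (D2 : (x - IZR n - b1) / L <= (b0 - b1)/L) by (apply Rmult_le_compat_r; [apply Rlt_le, Rinv_0_lt_compat; lra| lra]).
    rewrite (FF_p2 (- n - 1)); rewrite minus_IZR, opp_IZR.
    + replace (L * (- (- b1 + (x - IZR n - b1) / L + IZR n) - (- IZR n - 1) - b0))
        with (L * (1 - b0 + b1) - (x - IZR n - b1)) by (field; lra).
      rewrite <- Hrel. ring.
    + lra.
  - rewrite (FF_p2 n x C1).
    assert (D1 : 0 <= L * (x - IZR n - b0)) by (apply Rmult_le_pos; lra).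
    assert (D2 : L * (x - IZR n - b0) <= L * (1 - b0 + b1)) by (apply Rmult_le_compat_l; lra).
    rewrite (FF_p1 (- n - 1)); rewrite minus_IZR, opp_IZR.
    + replace ((- (1 - b0 + L * (x - IZR n - b0) + IZR n) - (- IZR n - 1) - b1) / L)
        with ((b0 - b1)/L - (x - IZR n - b0)) by (field; lra).
      rewrite relL. ring.
    + lra.
Qed.


Definition Bnd (x y : R) := (y - x) / L <= FF y - FF x <= L * (y - x).

Lemma divL_le a : 0 <= a -> a / L <= a.
Proof. intros. pose proof Lpos. apply (Rmult_le_reg_r L); [lra|]. unfold Rdiv. rewrite Rmult_assoc, Rinv_l; nra. Qed.
Lemma le_mulL a : 0 <= a -> a <= L * a.
Proof. intros. nra. Qed.

Lemma Bnd_trans x y z : x <= y -> y <= z -> Bnd x y -> Bnd y z -> Bnd x z.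
Proof.
  unfold Bnd. intros _ _ [A B] [C D].
  replace ((z - x)/L) with ((y-x)/L + (z-y)/L) by (field; lra). lra.
Qed.

Lemma Bnd_cell (n : Z) x y : b1 + IZR n <= x -> x <= y -> y <= b1 + IZR n + 1 -> Bnd x y.
Proof.
  intros H1 H2 H3. pose proof b0lt. unfold Bnd.
  destruct (Rle_or_lt y (b0 + IZR n)).
  - rewrite (FF_p1 n x), (FF_p1 n y) by lra.
    replace (- b1 + (y - IZR n - b1) / L + IZR n - (- b1 + (x - IZR n - b1) / L + IZR n)) with ((y - x)/L) by (field; lra).
    pose proof (divL_le (y - x)). pose proof (le_mulL (y - x)). lra.
  - destruct (Rle_or_lt (b0 + IZR n) x).
    + rewrite (FF_p2 n x), (FF_p2 n y) by lra.
      replace (1 - b0 + L * (y - IZR n - b0) + IZR n - (1 - b0 + L * (x - IZR n - b0) + IZR n)) with (L * (y - x)) by ring.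
      pose proof (divL_le (y - x)). pose proof (le_mulL (y - x)). lra.
    + rewrite (FF_p1 n x), (FF_p2 n y) by lra.
      set (u := b0 + IZR n - x). set (v := y - (b0 + IZR n)).
      replace (1 - b0 + L * (y - IZR n - b0) + IZR n - (- b1 + (x - IZR n - b1) / L + IZR n))
        with ((1 - b0 + b1) - (b0 - b1)/L + u / L + L * v) by (unfold u, v; field; lra).
      rewrite relL. replace (y - x) with (u + v) by (unfold u, v; ring).
      replace ((u + v)/L) with (u/L + v/L) by (field; lra).
      pose proof (divL_le u). pose proof (le_mulL u). pose proof (divL_le v). pose proof (le_mulL v).
      unfold u, v in *. lra.
Qed.

Lemma Bnd_all x y : x <= y -> Bnd x y.
Proof.
  intros Hxy. destruct (fl_int (x - b1)) as [n Hn]. pose proof (fl_spec (x - b1)) as Hs. rewrite Hn in Hs.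
  destruct (Rle_or_lt y (b1 + IZR n + 1)) as [Hy|Hy].
  - apply (Bnd_cell n); lra.
  - assert (exists k : nat, y <= b1 + IZR n + INR k + 1) as [k Hk].
    { destruct (archimed (y - b1 - IZR n)) as [A _].
      exists (Z.to_nat (up (y - b1 - IZR n))). rewrite INR_IZR_INZ, Z2Nat.id.
      - lra.
      - apply le_IZR. lra. }
    revert y Hy Hxy Hk. induction k as [|k IH]; intros y Hy Hxy Hk.
    + simpl in Hk. lra.
    + rewrite S_INR in Hk. destruct (Rle_or_lt y (b1 + IZR n + INR k + 1)) as [h|h].
      * apply IH; auto.
      * pose proof (pos_INR k).
        apply (Bnd_trans x (b1 + IZR n + INR k + 1) y); try lra.
        -- destruct (Rle_or_lt (b1 + IZR n + INR k + 1) (b1 + IZR n + 1)).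
           ++ apply (Bnd_cell n); lra.
           ++ apply IH; lra.
        -- apply (Bnd_cell (n + Z.of_nat k + 1)); rewrite ?plus_IZR, <- ?INR_IZR_INZ; lra.
Qed.

Lemma FF_mono x y : x < y -> FF x < FF y.
Proof.
  intros H. destruct (Bnd_all x y) as [A _]; [lra|].
  assert (0 < (y - x)/L) by (apply Rdiv_lt_0_compat; lra). lra.
Qed.

Lemma FF_mono_le x y : x <= y -> FF x <= FF y.
Proof. intros [H|H]; [left; apply FF_mono; auto| subst; lra]. Qed.

Lemma FF_lip x y : Rabs (FF x - FF y) <= L * Rabs (x - y).
Proof.
  destruct (Rle_or_lt x y) as [h|h].
  - destruct (Bnd_all x y h) as [A B].
    assert ((y - x)/L >= 0) by (apply Rle_ge, div_nonneg; lra).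
    rewrite (Rabs_left1 (x - y)) by lra. rewrite Rabs_left1 by lra. lra.
  - destruct (Bnd_all y x) as [A B]; [lra|].
    assert ((x - y)/L >= 0) by (apply Rle_ge, div_nonneg; lra).
    rewrite (Rabs_right (x - y)) by lra. rewrite Rabs_right by lra. lra.
Qed.

Definition Finv (y : R) := - FF (- y).
Lemma FF_Finv y : FF (Finv y) = y.
Proof. unfold Finv. rewrite FF_inv. ring. Qed.
Lemma Finv_FF x : Finv (FF x) = x.
Proof. unfold Finv. rewrite FF_inv. ring. Qed.
Lemma FF_inj x y : FF x = FF y -> x = y.
Proof. intros H. rewrite <- (Finv_FF x), <- (Finv_FF y), H. auto. Qed.


Definition It (n : nat) (x : R) : R := Nat.iter n FF x.

Lemma It_S n x : It (S n) x = FF (It n x). Proof. reflexivity. Qed.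
Lemma It_add n m x : It (n + m) x = It n (It m x). Proof. unfold It. apply Nat.iter_add. Qed.
Lemma It_S' n x : It (S n) x = It n (FF x).
Proof. replace (S n) with (n + 1)%nat by lia. rewrite It_add. reflexivity. Qed.
Lemma It_shift n x k : It n (x + IZR k) = It n x + IZR k.
Proof. induction n; simpl; auto. unfold It in *. simpl. rewrite IHn. apply FF_shift. Qed.
Lemma It_mono n x y : x < y -> It n x < It n y.
Proof. induction n; intros. - exact H. - rewrite !It_S. apply FF_mono; auto. Qed.
Lemma It_mono_le n x y : x <= y -> It n x <= It n y.
Proof. intros [H|H]; [left; apply It_mono; auto| subst; lra]. Qed.
Lemma It_inj n x y : It n x = It n y -> x = y.
Proof.
  intros H. destruct (Rtotal_order x y) as [h|[h|h]]; auto.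
  - apply (It_mono n) in h; lra.
  - apply (It_mono n) in h; lra.
Qed.
Lemma It_lip n x y : Rabs (It n x - It n y) <= L ^ n * Rabs (x - y).
Proof.
  induction n. { unfold It; simpl; lra. }
  rewrite !It_S. simpl pow. eapply Rle_trans; [apply FF_lip|]. rewrite Rmult_assoc.
  apply Rmult_le_compat_l; lra.
Qed.
Lemma It_cont n : continuity (It n).
Proof. apply (lip_cont _ (L ^ n)); [apply pow_lt; lra| apply It_lip]. Qed.

Lemma It_zero_cmp n x : It n 0 + floorR x <= It n x <= It n 0 + floorR x + 1.
Proof.
  destruct (fl_int x) as [k Hk]. pose proof (fl_spec x). rewrite Hk in *.
  pose proof (It_shift n 0 k). pose proof (It_shift n 0 (k+1)). rewrite plus_IZR in H1.
  replace (0 + IZR k) with (IZR k) in H0 by ring.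
  replace (0 + (IZR k + 1)) with (IZR k + 1) in H1 by ring.
  pose proof (It_mono_le n (IZR k) x). pose proof (It_mono_le n x (IZR k + 1)). lra.
Qed.

Definition GG (x : R) := - FF x.
Lemma GG_inv x : GG (GG x) = x. Proof. unfold GG. rewrite FF_inv. ring. Qed.
Lemma GG_shift x k : GG (x + IZR k) = GG x - IZR k. Proof. unfold GG. rewrite FF_shift. ring. Qed.
Lemma rev_id k x : It k (GG (It k x)) = GG x.
Proof.
  revert x. induction k; intros x. { reflexivity. }
  rewrite (It_S' k x). rewrite It_S. rewrite IHk. unfold GG. rewrite FF_inv. ring.
Qed.

Definition rot (r : R) := Un_cv (fun n => (It n 0 - 0) / INR n) r.

Lemma It_mult_per n x m j : It n x = x + IZR m -> It (j * n) x = x + INR j * IZR m.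
Proof.
  intros H. induction j. { simpl. unfold It. simpl. ring. }
  replace (S j * n)%nat with (n + j * n)%nat by lia. rewrite It_add, IHj.
  replace (x + INR j * IZR m) with (x + IZR (Z.of_nat j * m)) by (rewrite mult_IZR, <- INR_IZR_INZ; ring).
  rewrite It_shift, H, S_INR, mult_IZR, <- INR_IZR_INZ. ring.
Qed.

Lemma rot_per r n x m : rot r -> (0 < n)%nat -> It n x = x + IZR m -> r = IZR m / INR n.
Proof.
  intros Hr Hn H. apply (sub_lim _ r n _ 1 Hr Hn); [lra|].
  intros j Hj. pose proof (It_mult_per n x m j H). pose proof (It_zero_cmp (j*n) x).
  pose proof (fl_spec x).
  assert (Hj0 : 0 < INR j) by (apply lt_0_INR; lia). assert (Hn0 : 0 < INR n) by (apply lt_0_INR; lia).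
  rewrite mult_INR.
  replace ((It (j * n) 0 - 0) / (INR j * INR n) - IZR m / INR n) with ((It (j*n) 0 - INR j * IZR m) / (INR j * INR n)) by (field; lra).
  assert (1 <= INR n) by (apply (le_INR 1); lia).
  set (E := It (j * n) 0 - INR j * IZR m). assert (HE : -1 <= E <= 1) by (unfold E; lra).
  apply Rabs_le. split.
  - apply (Rmult_le_reg_r (INR j * INR n)); [nra|].
    replace (E / (INR j * INR n) * (INR j * INR n)) with E by (field; lra).
    replace (- (1 / INR j) * (INR j * INR n)) with (- INR n) by (field; lra). lra.
  - apply (Rmult_le_reg_r (INR j * INR n)); [nra|].
    replace (E / (INR j * INR n) * (INR j * INR n)) with E by (field; lra).
    replace (1 / INR j * (INR j * INR n)) with (INR n) by (field; lra). lra.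
Qed.

Lemma It_mult_ge n c j x : (forall z, z + c <= It n z) -> x + INR j * c <= It (j * n) x.
Proof.
  intros H. induction j. { simpl. unfold It. simpl. lra. }
  replace (S j * n)%nat with (n + j * n)%nat by lia. rewrite It_add, S_INR.
  specialize (H (It (j * n) x)). lra.
Qed.
Lemma It_mult_le n c j x : (forall z, It n z <= z + c) -> It (j * n) x <= x + INR j * c.
Proof.
  intros H. induction j. { simpl. unfold It. simpl. lra. }
  replace (S j * n)%nat with (n + j * n)%nat by lia. rewrite It_add, S_INR.
  specialize (H (It (j * n) x)). pose proof (It_mono_le n (It (j*n) x) (x + INR j * c) IHj). lra.
Qed.

Lemma rot_ge r n c : rot r -> (0 < n)%nat -> (forall z, z + c <= It n z) -> c / INR n <= r.
Proof.
  intros Hr Hn H. apply (lim_ge _ r n _ Hr Hn). intros j Hj.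
  pose proof (It_mult_ge n c j 0 H).
  assert (Hj0 : 0 < INR j) by (apply lt_0_INR; lia). assert (Hn0 : 0 < INR n) by (apply lt_0_INR; lia).
  rewrite mult_INR. apply (Rmult_le_reg_r (INR j * INR n)); [nra|].
  replace (c / INR n * (INR j * INR n)) with (INR j * c) by (field; lra).
  replace ((It (j * n) 0 - 0) / (INR j * INR n) * (INR j * INR n)) with (It (j*n) 0) by (field; lra). lra.
Qed.
Lemma rot_le r n c : rot r -> (0 < n)%nat -> (forall z, It n z <= z + c) -> r <= c / INR n.
Proof.
  intros Hr Hn H. apply (lim_le _ r n _ Hr Hn). intros j Hj.
  pose proof (It_mult_le n c j 0 H).
  assert (Hj0 : 0 < INR j) by (apply lt_0_INR; lia). assert (Hn0 : 0 < INR n) by (apply lt_0_INR; lia).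
  rewrite mult_INR. apply (Rmult_le_reg_r (INR j * INR n)); [nra|].
  replace (c / INR n * (INR j * INR n)) with (INR j * c) by (field; lra).
  replace ((It (j * n) 0 - 0) / (INR j * INR n) * (INR j * INR n)) with (It (j*n) 0) by (field; lra). lra.
Qed.

Definition Dq (q : nat) (P : Z) (z : R) := It q z - z - IZR P.
Lemma Dq_cont q P : continuity (Dq q P).
Proof.
  apply (lip_cont _ (L ^ q + 1)); [pose proof (pow_lt L q ltac:(lra)); lra|].
  intros x y. unfold Dq. replace (It q x - x - IZR P - (It q y - y - IZR P)) with ((It q x - It q y) + - (x - y)) by ring.
  eapply Rle_trans; [apply Rabs_triang|]. rewrite Rabs_Ropp. pose proof (It_lip q x y). lra.
Qed.
Lemma Dq_per q P z k : Dq q P (z + IZR k) = Dq q P z.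
Proof. unfold Dq. rewrite It_shift. ring. Qed.
Lemma Dq_red q P z : exists z', 0 <= z' <= 1 /\ Dq q P z = Dq q P z'.
Proof.
  destruct (fl_int z) as [k Hk]. pose proof (fl_spec z). rewrite Hk in H.
  exists (z - IZR k). split; [lra|]. rewrite <- (Dq_per q P (z - IZR k) k). f_equal. ring.
Qed.

Lemma fix_exists r q P : rot r -> (0 < q)%nat -> r = IZR P / INR q -> exists z, It q z = z + IZR P.
Proof.
  intros Hr Hq HrP.
  assert (Hq0 : 0 < INR q) by (apply lt_0_INR; lia).
  cut (exists z, Dq q P z = 0). { intros [z Hz]. exists z. unfold Dq in Hz. lra. }
  pose proof (Dq_cont q P) as Hc.
  destruct (Rtotal_order (Dq q P 0) 0) as [h0|[h0|h0]].
  - destruct (classic (exists z, 0 <= z <= 1 /\ 0 <= Dq q P z)) as [[z [Hz1 Hz2]]|Hn].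
    + destruct Hz2 as [Hz2|Hz2]; [|exists z; auto].
      assert (0 < z) by (destruct (Req_dec z 0); [subst; lra| lra]).
      destruct (IVT (Dq q P) 0 z Hc H h0 Hz2) as [w [_ Hw]]. exists w; auto.
    + exfalso. assert (Hneg : forall z, 0 <= z <= 1 -> Dq q P z < 0).
      { intros z Hz. destruct (Rlt_or_le (Dq q P z) 0); auto. exfalso. apply Hn. exists z; auto. }
      destruct (continuity_ab_min (fun z => - Dq q P z) 0 1 ltac:(lra)) as [mx [Hmx1 Hmx2]].
      { intros c _. apply continuity_opp. apply Hc. }
      set (eps := - Dq q P mx). assert (0 < eps) by (unfold eps; pose proof (Hneg mx Hmx2); lra).
      assert (Hall : forall z, It q z <= z + (IZR P - eps)).
      { intros z. destruct (Dq_red q P z) as [z' [Hz' Hzz]]. pose proof (Hmx1 z' Hz'). unfold eps in *.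
        unfold Dq in *. lra. }
      pose proof (rot_le r q _ Hr Hq Hall). rewrite HrP in H0.
      assert ((IZR P - eps)/INR q < IZR P / INR q).
      { unfold Rdiv. apply Rmult_lt_compat_r; [apply Rinv_0_lt_compat; lra| lra]. }
      lra.
  - exists 0. auto.
  - destruct (classic (exists z, 0 <= z <= 1 /\ Dq q P z <= 0)) as [[z [Hz1 Hz2]]|Hn].
    + destruct Hz2 as [Hz2|Hz2]; [|exists z; auto].
      assert (0 < z) by (destruct (Req_dec z 0); [subst; lra| lra]).
      destruct (IVT (fun t => - Dq q P t) 0 z (continuity_opp _ Hc) H ltac:(lra) ltac:(lra)) as [w [_ Hw]].
      exists w; lra.
    + exfalso. assert (Hpos : forall z, 0 <= z <= 1 -> 0 < Dq q P z).
      { intros z Hz. destruct (Rlt_or_le 0 (Dq q P z)); auto. exfalso. apply Hn. exists z; auto. }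
      destruct (continuity_ab_min (Dq q P) 0 1 ltac:(lra)) as [mx [Hmx1 Hmx2]].
      { intros c _. apply Hc. }
      set (eps := Dq q P mx). assert (0 < eps) by (unfold eps; pose proof (Hpos mx Hmx2); lra).
      assert (Hall : forall z, z + (IZR P + eps) <= It q z).
      { intros z. destruct (Dq_red q P z) as [z' [Hz' Hzz]]. pose proof (Hmx1 z' Hz'). unfold eps in *.
        unfold Dq in *. lra. }
      pose proof (rot_ge r q _ Hr Hq Hall). rewrite HrP in H0.
      assert (IZR P / INR q < (IZR P + eps)/INR q).
      { unfold Rdiv. apply Rmult_lt_compat_r; [apply Rinv_0_lt_compat; lra| lra]. }
      lra.
Qed.

Definition isB (y : R) := (exists n : Z, y = b0 + IZR n) \/ (exists n : Z, y = b1 + IZR n).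

Lemma aff1 t t' : t < t' -> (forall z, t < z < t' -> ~ isB z) ->
  exists s, 0 < s /\ forall z, t <= z <= t' -> FF z = FF t + s * (z - t).
Proof.
  intros Htt HB. pose proof b0lt. pose proof Lpos.
  destruct (fl_int (t - b1)) as [n Hn]. pose proof (fl_spec (t - b1)) as Hs. rewrite Hn in Hs.
  destruct (Rlt_or_le t (b0 + IZR n)) as [h|h].
  - assert (t' <= b0 + IZR n).
    { destruct (Rle_or_lt t' (b0 + IZR n)); auto. exfalso. apply (HB (b0 + IZR n)); [lra|]. left; eauto. }
    exists (/ L). split; [apply Rinv_0_lt_compat; lra|]. intros z Hz.
    rewrite (FF_p1 n z), (FF_p1 n t) by lra. field. lra.
  - assert (t' <= b1 + IZR n + 1).
    { destruct (Rle_or_lt t' (b1 + IZR n + 1)); auto. exfalso. apply (HB (b1 + IZR n + 1)); [lra|].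
      right. exists (n + 1)%Z. rewrite plus_IZR. ring. }
    exists L. split; [lra|]. intros z Hz.
    rewrite (FF_p2 n z), (FF_p2 n t) by lra. ring.
Qed.

Lemma aff_n n t t' : t < t' -> (forall j z, (j < n)%nat -> t < z < t' -> ~ isB (It j z)) ->
  exists s, 0 < s /\ forall z, t <= z <= t' -> It n z = It n t + s * (z - t).
Proof.
  induction n as [|n IH]; intros Htt HB.
  - exists 1. split; [lra|]. intros z _. unfold It; simpl. ring.
  - assert (HB' : forall j z, (j < n)%nat -> t < z < t' -> ~ isB (It j z)) by (intros j z Hj Hz0; apply HB; [lia|exact Hz0]).
    destruct (IH Htt HB') as [s [Hs Hz]].
    assert (Hlt : It n t < It n t') by (apply It_mono; auto).
    destruct (aff1 (It n t) (It n t')) as [s' [Hs' Hz']]; auto.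
    { intros w Hw. set (z := t + (w - It n t) / s).
      assert (Ew : It n z = w).
      { rewrite (Hz z). - unfold z. field. lra.
        - unfold z. split.
          + assert (0 <= (w - It n t) / s) by (apply div_nonneg; lra). lra.
          + rewrite (Hz t') in Hw by lra. 
            assert ((w - It n t) / s <= t' - t); [|lra].
            apply (Rmult_le_reg_r s); auto. unfold Rdiv. rewrite Rmult_assoc, Rinv_l; lra. }
      rewrite <- Ew. apply (HB n z); [lia|]. unfold z. split.
      + assert (0 < (w - It n t) / s) by (apply Rdiv_lt_0_compat; lra). lra.
      + rewrite (Hz t') in Hw by lra.
        assert ((w - It n t) / s < t' - t); [|lra].
        apply (Rmult_lt_reg_r s); auto. unfold Rdiv. rewrite Rmult_assoc, Rinv_l; lra. }
    exists (s' * s). split; [nra|]. intros z Hzz. rewrite !It_S. rewrite (Hz z Hzz).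
    rewrite (Hz' (It n t + s * (z - t))). { ring. }
    rewrite (Hz t') in Hlt |- * by lra. split; nra.
Qed.

Definition rF (y : R) : R := if Rlt_dec (y - floorR (y - b1)) b0 then / L else L.
Definition lF (y : R) : R :=
  if Rle_dec (y - floorR (y - b1)) b1 then L
  else if Rle_dec (y - floorR (y - b1)) b0 then / L else L.

Lemma rF_pos y : 0 < rF y.
Proof. unfold rF. destruct Rlt_dec; [apply Rinv_0_lt_compat|]; lra. Qed.
Lemma lF_pos y : 0 < lF y.
Proof. unfold lF. destruct Rle_dec; [lra|]. destruct Rle_dec; [apply Rinv_0_lt_compat|]; lra. Qed.

Lemma rgermF y : exists d, 0 < d /\ forall z, y <= z <= y + d -> FF z = FF y + rF y * (z - y).
Proof.
  pose proof b0lt. destruct (fl_int (y - b1)) as [n Hn]. pose proof (fl_spec (y - b1)) as Hs. rewrite Hn in Hs.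
  unfold rF. rewrite Hn. destruct (Rlt_dec (y - IZR n) b0).
  - exists (b0 + IZR n - y). split; [lra|]. intros z Hz. rewrite (FF_p1 n z), (FF_p1 n y) by lra. field. lra.
  - exists (b1 + IZR n + 1 - y). split; [lra|]. intros z Hz. rewrite (FF_p2 n z), (FF_p2 n y) by lra. ring.
Qed.

Lemma lgermF y : exists d, 0 < d /\ forall z, y - d <= z <= y -> FF z = FF y + lF y * (z - y).
Proof.
  pose proof b0lt. destruct (fl_int (y - b1)) as [n Hn]. pose proof (fl_spec (y - b1)) as Hs. rewrite Hn in Hs.
  unfold lF. rewrite Hn. destruct (Rle_dec (y - IZR n) b1).
  - assert (y = b1 + IZR (n - 1) + 1) by (rewrite minus_IZR; lra).
    exists (y - (b0 + IZR (n - 1))). split; [rewrite minus_IZR in *; lra|]. intros z Hz.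
    rewrite (FF_p2 (n-1) z), (FF_p2 (n-1) y) by (rewrite minus_IZR in *; lra). ring.
  - destruct (Rle_dec (y - IZR n) b0).
    + exists (y - (b1 + IZR n)). split; [lra|]. intros z Hz. rewrite (FF_p1 n z), (FF_p1 n y) by lra. field. lra.
    + exists (y - (b0 + IZR n)). split; [lra|]. intros z Hz. rewrite (FF_p2 n z), (FF_p2 n y) by lra. ring.
Qed.

Fixpoint Rs (n : nat) (t : R) : R := match n with O => 1 | S k => Rs k t * rF (It k t) end.
Fixpoint Ls (n : nat) (t : R) : R := match n with O => 1 | S k => Ls k t * lF (It k t) end.

Lemma Rs_pos n t : 0 < Rs n t.
Proof. induction n; simpl; [lra|]. pose proof (rF_pos (It n t)). nra. Qed.
Lemma Ls_pos n t : 0 < Ls n t.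
Proof. induction n; simpl; [lra|]. pose proof (lF_pos (It n t)). nra. Qed.

Lemma rgerm n t : exists d, 0 < d /\ forall z, t <= z <= t + d -> It n z = It n t + Rs n t * (z - t).
Proof.
  induction n as [|n IH].
  - exists 1. split; [lra|]. intros. unfold It; simpl. ring.
  - destruct IH as [d1 [Hd1 H1]]. destruct (rgermF (It n t)) as [d2 [Hd2 H2]].
    pose proof (Rs_pos n t) as HR.
    set (d := Rmin d1 (d2 / Rs n t)).
    assert (Hd : 0 < d) by (unfold d; apply Rmin_pos; [auto| apply Rdiv_lt_0_compat; auto]).
    exists d. split; auto. intros z Hz.
    assert (Hz1 : z - t <= d1) by (pose proof (Rmin_l d1 (d2 / Rs n t)); unfold d in Hz; lra).
    assert (Hz2 : Rs n t * (z - t) <= d2).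
    { pose proof (Rmin_r d1 (d2 / Rs n t)). unfold d in Hz.
      assert (z - t <= d2 / Rs n t) by lra. apply (Rmult_le_compat_l (Rs n t)) in H0; [|lra].
      replace (Rs n t * (d2 / Rs n t)) with d2 in H0 by (field; lra). lra. }
    rewrite !It_S, (H1 z) by lra. rewrite (H2 (It n t + Rs n t * (z - t))) by nra. simpl. ring.
Qed.

Lemma lgerm n t : exists d, 0 < d /\ forall z, t - d <= z <= t -> It n z = It n t + Ls n t * (z - t).
Proof.
  induction n as [|n IH].
  - exists 1. split; [lra|]. intros. unfold It; simpl. ring.
  - destruct IH as [d1 [Hd1 H1]]. destruct (lgermF (It n t)) as [d2 [Hd2 H2]].
    pose proof (Ls_pos n t) as HR.
    set (d := Rmin d1 (d2 / Ls n t)).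
    assert (Hd : 0 < d) by (unfold d; apply Rmin_pos; [auto| apply Rdiv_lt_0_compat; auto]).
    exists d. split; auto. intros z Hz.
    assert (Hz1 : t - z <= d1) by (pose proof (Rmin_l d1 (d2 / Ls n t)); unfold d in Hz; lra).
    assert (Hz2 : Ls n t * (t - z) <= d2).
    { pose proof (Rmin_r d1 (d2 / Ls n t)). unfold d in Hz.
      assert (t - z <= d2 / Ls n t) by lra. apply (Rmult_le_compat_l (Ls n t)) in H0; [|lra].
      replace (Ls n t * (d2 / Ls n t)) with d2 in H0 by (field; lra). lra. }
    rewrite !It_S, (H1 z) by lra. rewrite (H2 (It n t + Ls n t * (z - t))) by nra. simpl. ring.
Qed.

Lemma Rs_par n t : exists a b : nat, (a + b = n)%nat /\ Rs n t = L ^ a * (/ L) ^ b.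
Proof.
  induction n as [|n [a [b [Hab E]]]].
  - exists O, O. simpl. split; auto; ring.
  - simpl. rewrite E. unfold rF. destruct Rlt_dec.
    + exists a, (S b). split; [lia|]. simpl. ring.
    + exists (S a), b. split; [lia|]. simpl. ring.
Qed.

Lemma rl_nonB y : ~ isB y -> rF y = lF y.
Proof.
  intros HB. pose proof b0lt. unfold rF, lF.
  destruct (fl_int (y - b1)) as [n Hn]. pose proof (fl_spec (y - b1)) as Hs. rewrite Hn in *.
  destruct (Rle_dec (y - IZR n) b1).
  - exfalso. apply HB. right. exists n. lra.
  - destruct (Rle_dec (y - IZR n) b0); destruct (Rlt_dec (y - IZR n) b0); auto.
    + exfalso. apply HB. left. exists n. lra.
    + lra.
Qed.
Lemma rF_b0 n : rF (b0 + IZR n) = L.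
Proof.
  pose proof b0lt. unfold rF. replace (b0 + IZR n - b1) with ((b0 - b1) + IZR n) by ring.
  rewrite fl_shift. rewrite (fl_unique 0) by lra.
  destruct Rlt_dec; auto. lra.
Qed.
Lemma lF_b0 n : lF (b0 + IZR n) = / L.
Proof.
  pose proof b0lt. unfold lF. replace (b0 + IZR n - b1) with ((b0 - b1) + IZR n) by ring.
  rewrite fl_shift. rewrite (fl_unique 0) by lra.
  destruct Rle_dec; [lra|]. destruct Rle_dec; auto. lra.
Qed.
Lemma rF_b1 n : rF (b1 + IZR n) = / L.
Proof.
  unfold rF. replace (b1 + IZR n - b1) with (0 + IZR n) by ring.
  rewrite fl_shift. rewrite (fl_unique 0 0) by lra.
  destruct Rlt_dec; auto. lra.
Qed.
Lemma lF_b1 n : lF (b1 + IZR n) = L.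
Proof.
  unfold lF. replace (b1 + IZR n - b1) with (0 + IZR n) by ring.
  rewrite fl_shift. rewrite (fl_unique 0 0) by lra.
  destruct Rle_dec; auto. lra.
Qed.

Lemma rF_b0z : rF b0 = L. Proof. rewrite <- (rF_b0 0). f_equal. simpl. ring. Qed.
Lemma lF_b0z : lF b0 = / L. Proof. rewrite <- (lF_b0 0). f_equal. simpl. ring. Qed.

Fixpoint Qs (n : nat) (t : R) : R := match n with O => 1 | S k => Qs k t * (rF (It k t) / lF (It k t)) end.
Lemma Rs_Ls_Qs n t : Rs n t = Ls n t * Qs n t.
Proof.
  induction n; simpl; [ring|]. rewrite IHn. pose proof (lF_pos (It n t)). field. lra.
Qed.
Lemma Qs_one n1 n2 t : (n1 <= n2)%nat -> (forall j, (n1 <= j < n2)%nat -> ~ isB (It j t)) -> Qs n2 t = Qs n1 t.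
Proof.
  intros Hn. induction Hn; intros HB; auto.
  simpl. rewrite IHHn by (intros j Hj; apply HB; lia).
  rewrite rl_nonB by (apply HB; lia). pose proof (lF_pos (It m t)). field. lra.
Qed.

Lemma aff_germ n x y : x < y -> (forall j z, (j < n)%nat -> x < z < y -> ~ isB (It j z)) ->
  Rs n x = Ls n y /\ forall z, x <= z <= y -> It n z = It n x + Rs n x * (z - x).
Proof.
  intros Hxy HB. destruct (aff_n n x y Hxy HB) as [s [Hs Hz]].
  destruct (rgerm n x) as [d1 [Hd1 H1]]. destruct (lgerm n y) as [d2 [Hd2 H2]].
  assert (E1 : s = Rs n x).
  { set (e := Rmin d1 (y - x)). assert (0 < e) by (unfold e; apply Rmin_pos; lra).
    pose proof (Rmin_l d1 (y - x)). pose proof (Rmin_r d1 (y - x)).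
    specialize (Hz (x + e)). specialize (H1 (x + e)). fold e in H0, H3.
    rewrite Hz in H1 by lra. rewrite H1 in Hz by lra.
    assert (s * e = Rs n x * e) by (rewrite <- (Hz ltac:(lra)) in H1; lra).
    apply (Rmult_eq_reg_r e); lra. }
  assert (E2 : s = Ls n y).
  { set (e := Rmin d2 (y - x)). assert (He0 : 0 < e) by (unfold e; apply Rmin_pos; lra).
    pose proof (Rmin_l d2 (y - x)) as He1. pose proof (Rmin_r d2 (y - x)) as He2. fold e in He1, He2.
    pose proof (Hz (y - e) ltac:(lra)) as A. pose proof (H2 (y - e) ltac:(lra)) as B.
    pose proof (Hz y ltac:(lra)) as C.
    assert (s * e = Ls n y * e).
    { rewrite A, C in B. ring_simplify in B. lra. }
    apply (Rmult_eq_reg_r e); lra. }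
  split; [congruence|]. intros z Hz'. rewrite <- E1. apply Hz; auto.
Qed.

Lemma FF_b0 : FF b0 = 1 - b0.
Proof. rewrite (FF_p1 0 b0) by (simpl; lra). simpl. replace (b0 - 0 - b1) with (b0 - b1) by ring. rewrite relL. ring. Qed.
Lemma FF_b1 : FF b1 = - b1.
Proof. rewrite (FF_p1 0 b1) by (simpl; lra). simpl. field. lra. Qed.
Lemma GG_b0 : GG b0 = b0 - 1. Proof. unfold GG. rewrite FF_b0. ring. Qed.
Lemma GG_b1 : GG b1 = b1. Proof. unfold GG. rewrite FF_b1. ring. Qed.

Lemma int01 (z : Z) : 0 <= IZR z <= 1 -> z = 0%Z \/ z = 1%Z.
Proof. intros [A B]. apply le_IZR in A. apply le_IZR in B. lia. Qed.

Lemma Fy_int y (k : Z) : FF y + y = IZR k -> (exists n, y = b0 + IZR n) \/ (exists n, y = b1 + IZR n).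
Proof.
  intros H. pose proof b0lt. pose proof relL. pose proof Lpos.
  destruct (cell y) as [n [C|C]].
  - rewrite (FF_p1 n y C) in H. set (t := y - IZR n - b1) in *.
    assert (Et : t / L + t = IZR (k - 2 * n)) by (rewrite minus_IZR, mult_IZR; simpl; unfold t in *; lra).
    assert (Hb1 : 0 <= t / L) by (apply div_nonneg; unfold t; lra).
    assert (Hb2 : t / L <= (b0 - b1) / L) by (apply Rmult_le_compat_r; [left; apply Rinv_0_lt_compat; lra| unfold t; lra]).
    destruct (int01 (k - 2 * n)) as [e|e]; [unfold t in *; lra| |].
    + rewrite e in Et. simpl in Et. right. exists n. unfold t in *. lra.
    + rewrite e in Et. simpl in Et. left. exists n.
      assert (t = b0 - b1); [|unfold t in *; lra].
      destruct (Rtotal_order t (b0 - b1)) as [h|[h|h]]; auto; exfalso.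
      * assert (t / L < (b0 - b1)/L) by (apply Rmult_lt_compat_r; [apply Rinv_0_lt_compat; lra| lra]). lra.
      * unfold t in *; lra.
  - rewrite (FF_p2 n y C) in H. set (t := y - IZR n - b0) in *.
    assert (Et : L * t + t = IZR (k - 2 * n - 1)) by (rewrite !minus_IZR, mult_IZR; simpl; unfold t in *; lra).
    assert (Hb1 : 0 <= L * t) by (apply Rmult_le_pos; unfold t; lra).
    assert (Hb2 : L * t <= L * (1 - b0 + b1)) by (apply Rmult_le_compat_l; unfold t; lra).
    destruct (int01 (k - 2 * n - 1)) as [e|e]; [unfold t in *; lra| |].
    + rewrite e in Et. simpl in Et. left. exists n. unfold t in *. nra.
    + rewrite e in Et. simpl in Et. right. exists (n + 1)%Z. rewrite plus_IZR.
      assert (t = 1 - b0 + b1); [|unfold t in *; lra].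
      destruct (Rtotal_order t (1 - b0 + b1)) as [h|[h|h]]; auto; exfalso.
      * assert (L * t < L * (1 - b0 + b1)) by (apply Rmult_lt_compat_l; lra). lra.
      * unfold t in *; lra.
Qed.

Lemma b0b1_notint (n : Z) : b0 <> b1 + IZR n.
Proof.
  intros E. pose proof b0lt. assert (0 < IZR n < 1) by lra. destruct H0 as [A B].
  apply lt_IZR in A. apply lt_IZR in B. lia.
Qed.

Lemma It_comm a b x : It a (It b x) = It b (It a x).
Proof. rewrite <- !It_add. f_equal. lia. Qed.

Lemma pow_period n t x m : (0 < t)%nat -> It (t * n) x = x + INR t * IZR m -> It n x = x + IZR m.
Proof.
  intros Ht H. destruct (Rtotal_order (It n x) (x + IZR m)) as [h|[h|h]]; auto; exfalso.
  - assert (forall j, (0 < j)%nat -> It (j * n) x < x + INR j * IZR m).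
    { intros j Hj. induction j; [lia|]. destruct j.
      - simpl. replace (n + 0)%nat with n by lia. lra.
      - replace (S (S j) * n)%nat with (n + S j * n)%nat by lia. rewrite It_add.
        specialize (IHj ltac:(lia)).
        pose proof (It_mono n _ _ IHj).
        replace (x + INR (S j) * IZR m) with (x + IZR (Z.of_nat (S j) * m)) in H0 by (rewrite mult_IZR, <- INR_IZR_INZ; ring).
        rewrite It_shift in H0. rewrite mult_IZR, <- INR_IZR_INZ in H0. rewrite (S_INR (S j)). lra. }
    specialize (H0 t Ht). lra.
  - assert (forall j, (0 < j)%nat -> x + INR j * IZR m < It (j * n) x).
    { intros j Hj. induction j; [lia|]. destruct j.
      - simpl. replace (n + 0)%nat with n by lia. lra.
      - replace (S (S j) * n)%nat with (n + S j * n)%nat by lia. rewrite It_add.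
        specialize (IHj ltac:(lia)).
        pose proof (It_mono n _ _ IHj).
        replace (x + INR (S j) * IZR m) with (x + IZR (Z.of_nat (S j) * m)) in H0 by (rewrite mult_IZR, <- INR_IZR_INZ; ring).
        rewrite It_shift in H0. rewrite mult_IZR, <- INR_IZR_INZ in H0. rewrite (S_INR (S j)). lra. }
    specialize (H0 t Ht). lra.
Qed.

Lemma int_abs_lt1 (n : Z) : -1 < IZR n < 1 -> n = 0%Z.
Proof. intros [A B]. apply lt_IZR in A. apply lt_IZR in B. lia. Qed.

Variable q0 : nat.

Lemma odd_par t : Nat.Odd q0 -> Rs q0 t <> 1.
Proof.
  intros [h Hh] E. destruct (Rs_par q0 t) as [a [b [Hab Eab]]]. rewrite Eab in E.
  assert (E2 : L ^ a = L ^ b).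
  { assert (Hinv : (/ L) ^ b * L ^ b = 1) by (rewrite <- Rpow_mult_distr, Rinv_l, pow1; lra).
    replace (L ^ a) with (L ^ a * ((/ L) ^ b * L ^ b)) by (rewrite Hinv; ring).
    replace (L ^ a * ((/ L) ^ b * L ^ b)) with ((L ^ a * (/ L) ^ b) * L ^ b) by ring.
    rewrite E. ring. }
  assert (a = b).
  { destruct (Nat.lt_total a b) as [h1|[h1|h1]]; auto.
    - pose proof (Rlt_pow L _ _ HL h1). lra.
    - pose proof (Rlt_pow L _ _ HL h1). lra. }
  lia.
Qed.

Lemma odd_part1 u v : Nat.Odd q0 -> u < v -> exists x, u < x < v /\ ~ is_int (It q0 x - x).
Proof.
  intros Hodd Huv. destruct (rgerm q0 u) as [d [Hd Hg]].
  set (R := Rs q0 u) in *. pose proof (Rs_pos q0 u) as HR. fold R in HR.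
  set (e := Rmin d (Rmin ((v - u) / 2) (1 / (R + 1)))).
  assert (He : 0 < e) by (unfold e; repeat apply Rmin_pos; auto; apply Rdiv_lt_0_compat; lra).
  assert (He1 : e <= d) by apply Rmin_l.
  assert (He2 : e <= (v - u) / 2) by (eapply Rle_trans; [apply Rmin_r| apply Rmin_l]).
  assert (He3 : e <= 1 / (R + 1)) by (eapply Rle_trans; [apply Rmin_r| apply Rmin_r]).
  assert (HeR : e * (R + 1) <= 1).
  { apply (Rmult_le_compat_r (R + 1)) in He3; [|lra]. replace (1 / (R + 1) * (R + 1)) with 1 in He3 by (field; lra). lra. }
  destruct (classic (is_int (It q0 (u + e) - (u + e)))) as [[k1 E1]|N1].
  2:{ exists (u + e). split; auto; lra. }
  destruct (classic (is_int (It q0 (u + e / 2) - (u + e / 2)))) as [[k2 E2]|N2].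
  2:{ exists (u + e / 2). split; auto; lra. }
  exfalso. rewrite (Hg (u + e)) in E1 by lra. rewrite (Hg (u + e / 2)) in E2 by lra.
  assert (Ek : IZR (k1 - k2) = (R - 1) * (e / 2)) by (rewrite minus_IZR; lra).
  assert (k1 - k2 = 0)%Z.
  { apply int_abs_lt1. rewrite Ek. split; nra. }
  rewrite H in Ek. simpl in Ek. apply (odd_par u Hodd). fold R. nra.
Qed.

Variable r : R.
Variable q : nat.
Variable P : Z.
Hypothesis Hrot : rot r.
Hypothesis Hq : (0 < q)%nat.
Hypothesis HrP : r = IZR P / INR q.
Hypothesis HNT : forall (m : Z) (k : nat), (0 < k)%nat -> r = IZR m / INR k -> Nat.divide q k.

Lemma per_div k x m : (0 < k)%nat -> It k x = x + IZR m -> Nat.divide q k.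
Proof. intros Hk H. apply (HNT m k Hk). apply (rot_per r k x m Hrot Hk H). Qed.

Lemma no_small k x m : (0 < k < q)%nat -> It k x <> x + IZR m.
Proof.
  intros Hk H. destruct (per_div k x m ltac:(lia) H) as [c Hc]. subst k.
  destruct c; lia.
Qed.

Lemma per_q k x m : (0 < k)%nat -> It k x = x + IZR m -> It q x = x + IZR P.
Proof.
  intros Hk H. destruct (per_div k x m Hk H) as [t Ht]. subst k.
  assert (Ht0 : (0 < t)%nat) by (destruct t; lia).
  pose proof (rot_per r (t * q) x m Hrot Hk H) as E. rewrite HrP in E.
  assert (Hq0 : 0 < INR q) by (apply lt_0_INR; lia). assert (Ht1 : 0 < INR t) by (apply lt_0_INR; lia).
  rewrite mult_INR in E.
  assert (IZR m = INR t * IZR P).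
  { apply (Rmult_eq_reg_r (/ (INR t * INR q))); [|apply Rinv_neq_0_compat; nra].
    unfold Rdiv in E. rewrite <- E. field. lra. }
  apply (pow_period q t x P Ht0). rewrite H. rewrite H0. ring.
Qed.

Lemma odd_part2 : Nat.Odd q -> ~ exists k j, It k b0 = b1 + IZR j.
Proof.
  intros Hodd [k [j Hk]].
  destruct k as [|k'].
  { unfold It in Hk; simpl in Hk. apply (b0b1_notint j Hk). }
  set (k := S k') in *.
  pose proof (rev_id k b0) as R. rewrite Hk, GG_shift, GG_b1, GG_b0 in R.
  assert (E1 : It k b1 = b0 - 1 + IZR j).
  { replace (b1 - IZR j) with (b1 + IZR (- j)) in R by (rewrite opp_IZR; ring).
    rewrite It_shift, opp_IZR in R. lra. }
  assert (E2 : It (k + k) b0 = b0 + IZR (2 * j - 1)).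
  { rewrite It_add, Hk, It_shift, E1. rewrite minus_IZR, mult_IZR. simpl. ring. }
  assert (Hk0 : (0 < k + k)%nat) by (unfold k; lia).
  pose proof (per_div _ _ _ Hk0 E2) as [s Hs].
  pose proof (per_q _ _ _ Hk0 E2) as Eq.
  assert (Hdiv : exists t, k = (t * q)%nat).
  { destruct Hodd as [q' Hq']. destruct (Nat.Even_or_Odd s) as [[s' Hs']|[s' Hs']]; subst s.
    - exists s'. lia.
    - exfalso. subst q. 
      assert (k + k = 2 * (2 * s' * q' + s' + q') + 1)%nat by (rewrite Hs; ring). lia. }
  destruct Hdiv as [t Ht].
  pose proof (It_mult_per q b0 P t Eq) as E3. rewrite <- Ht, Hk in E3.
  apply (b0b1_notint (j - Z.of_nat t * P)). rewrite minus_IZR, mult_IZR, <- INR_IZR_INZ. lra.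
Qed.

Definition fixd (z : R) := It q z = z + IZR P.

Lemma fixd_shift z k : fixd z -> fixd (z + IZR k).
Proof. unfold fixd. intros H. rewrite It_shift, H. ring. Qed.

Lemma fixd_closed y : ~ fixd y -> exists d, 0 < d /\ forall w, Rabs (w - y) < d -> ~ fixd w.
Proof.
  intros Hy. pose proof (Dq_cont q P y) as Hc.
  assert (Hne : Dq q P y <> 0) by (unfold Dq, fixd in *; lra).
  destruct (Hc (Rabs (Dq q P y))) as [d [Hd Hw]]; [apply Rabs_pos_lt; auto|].
  exists d. split; auto. intros w Hwd Hfw.
  assert (Dq q P w = 0) by (unfold Dq, fixd in *; lra).
  destruct (Req_dec w y) as [e|ne]; [subst; unfold fixd in *; auto|].
  specialize (Hw w). simpl in Hw. unfold R_dist in Hw.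
  assert (Rabs (Dq q P w - Dq q P y) < Rabs (Dq q P y)) by (apply Hw; split; [split; [exact I| auto]| auto]).
  rewrite H in H0. replace (0 - Dq q P y) with (- Dq q P y) in H0 by ring. rewrite Rabs_Ropp in H0. lra.
Qed.

Definition MaxI (u v : R) := u < v /\ fixd u /\ fixd v /\ forall z, u < z < v -> ~ fixd z.

Lemma MaxI_eq u v u' v' z : MaxI u v -> MaxI u' v' -> u < z < v -> u' < z < v' -> u = u' /\ v = v'.
Proof.
  intros [A1 [A2 [A3 A4]]] [B1 [B2 [B3 B4]]] Hz Hz'.
  destruct (Rtotal_order u u') as [h|[h|h]].
  - exfalso. apply (A4 u'); auto. lra.
  - split; auto. destruct (Rtotal_order v v') as [h'|[h'|h']]; auto; exfalso.
    + apply (B4 v); auto; lra.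
    + apply (A4 v'); auto; lra.
  - exfalso. apply (B4 u); auto. lra.
Qed.

Lemma maxint x (z0 : R) : fixd z0 -> ~ fixd x -> exists u v, u < x < v /\ MaxI u v /\ v - u <= 1.
Proof.
  intros Hz0 Hx.
  destruct (sup_closed fixd x fixd_closed) as [u [Hu1 [Hu2 Hu3]]].
  { destruct (fl_int (x - z0)) as [k Hk]. pose proof (fl_spec (x - z0)). exists (z0 + IZR k).
    split; [lra| apply fixd_shift; auto]. }
  destruct (inf_closed fixd x fixd_closed) as [v [Hv1 [Hv2 Hv3]]].
  { destruct (fl_int (x - z0)) as [k Hk]. pose proof (fl_spec (x - z0)). exists (z0 + IZR (k + 1)).
    rewrite plus_IZR. split; [lra| ]. rewrite <- plus_IZR. apply fixd_shift; auto. }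
  assert (u <> x) by (intro; subst; auto). assert (v <> x) by (intro; subst; auto).
  exists u, v. split; [lra|]. 
  assert (HM : MaxI u v).
  { split; [lra|]. split; auto. split; auto. intros z Hz. destruct (Rle_or_lt z x).
    - apply Hu3; lra.
    - apply Hv3; lra. }
  split; auto. destruct (Rle_or_lt (v - u) 1); auto. exfalso.
  destruct HM as [_ [_ [_ H4]]]. apply (H4 (u + 1)); [lra|].
  replace 1 with (IZR 1) by auto. apply fixd_shift; auto.
Qed.

Definition Iv (d : nat) (w : R) := Nat.iter d Finv w.
Lemma It_Iv d w : It d (Iv d w) = w.
Proof.
  revert w. induction d; intros w; [reflexivity|].
  change (Iv (S d) w) with (Finv (Iv d w)). rewrite It_S'. rewrite FF_Finv. apply IHd.
Qed.

Lemma fixd_It d z : fixd z -> fixd (It d z).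
Proof. unfold fixd. intros H. rewrite It_comm, H, It_shift. auto. Qed.
Lemma fixd_It_rev d z : fixd (It d z) -> fixd z.
Proof.
  unfold fixd. intros H. rewrite It_comm in H. rewrite <- It_shift in H. apply It_inj in H. auto.
Qed.

Lemma MaxI_It d u v : MaxI u v -> MaxI (It d u) (It d v).
Proof.
  intros [A1 [A2 [A3 A4]]]. split; [apply It_mono; auto|]. split; [apply fixd_It; auto|].
  split; [apply fixd_It; auto|]. intros w Hw Hf.
  set (z := Iv d w). assert (Ez : It d z = w) by apply It_Iv.
  rewrite <- Ez in Hw, Hf. apply fixd_It_rev in Hf. apply (A4 z); auto.
  split.
  - destruct (Rle_or_lt z u); auto. destruct H; [apply (It_mono d) in H|rewrite H in Hw]; lra.
  - destruct (Rle_or_lt v z); auto. destruct H; [apply (It_mono d) in H|rewrite <- H in Hw]; lra.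
Qed.

Lemma MaxI_shift u v k : MaxI u v -> MaxI (u + IZR k) (v + IZR k).
Proof.
  intros [A1 [A2 [A3 A4]]]. split; [lra|]. split; [apply fixd_shift; auto|]. split; [apply fixd_shift; auto|].
  intros z Hz Hf. apply (A4 (z - IZR k)); [lra|].
  replace (z - IZR k) with (z + IZR (- k)) by (rewrite opp_IZR; ring). apply fixd_shift; auto.
Qed.

Lemma GG_dec x y : x < y -> GG y < GG x.
Proof. unfold GG. intros. pose proof (FF_mono x y H). lra. Qed.

Lemma fixd_GG y : fixd y -> fixd (GG y).
Proof.
  unfold fixd. intros H. pose proof (rev_id q (y - IZR P)) as R.
  assert (E : It q (y - IZR P) = y).
  { replace (y - IZR P) with (y + IZR (- P)) by (rewrite opp_IZR; ring). rewrite It_shift, H, opp_IZR. ring. }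
  assert (E2 : GG (y - IZR P) = GG y + IZR P).
  { replace (y - IZR P) with (y + IZR (- P)) by (rewrite opp_IZR; ring). rewrite GG_shift, opp_IZR. ring. }
  rewrite E, E2 in R. exact R.
Qed.

Lemma MaxI_GG u v : MaxI u v -> MaxI (GG v) (GG u).
Proof.
  intros [A1 [A2 [A3 A4]]]. split; [apply GG_dec; auto|]. split; [apply fixd_GG; auto|].
  split; [apply fixd_GG; auto|]. intros z Hz Hf.
  apply (A4 (GG z)).
  - rewrite <- (GG_inv u), <- (GG_inv v) in Hz. split.
    + destruct (Rle_or_lt (GG z) u); auto. destruct H; [apply GG_dec in H|subst]; rewrite ?GG_inv in *; lra.
    + destruct (Rle_or_lt v (GG z)); auto. destruct H; [apply GG_dec in H|subst]; rewrite ?GG_inv in *; lra.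
  - apply fixd_GG; auto.
Qed.


Lemma disj_le u v z z' j j' m : MaxI u v -> v - u <= 1 -> u < z < v -> u < z' < v ->
  (j' <= j < q)%nat -> It j z = It j' z' + IZR m -> j = j' /\ m = 0%Z /\ z = z'.
Proof.
  intros HM H1 Hz Hz' Hj E.
  set (d := (j - j')%nat). replace j with (j' + d)%nat in E by (unfold d; lia).
  rewrite It_add, <- It_shift in E. apply It_inj in E.
  destruct (MaxI_eq (It d u) (It d v) (u + IZR m) (v + IZR m) (It d z)) as [E1 _].
  - apply MaxI_It; auto.
  - apply MaxI_shift; auto.
  - split; apply It_mono; lra.
  - lra.
  - destruct d as [|d'] eqn:Hd.
    + unfold It in E; simpl in E. assert (m = 0%Z) by (apply int_abs_lt1; lra). subst m.
      split; [unfold d in Hd; lia|]. split; auto. simpl in E. lra.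
    + exfalso. destruct HM as [_ [Hu _]]. unfold fixd in Hu.
      apply (no_small (S d') u m); [unfold d in Hd; lia| auto].
Qed.

Lemma disj u v z z' j j' m : MaxI u v -> v - u <= 1 -> u < z < v -> u < z' < v ->
  (j < q)%nat -> (j' < q)%nat -> It j z = It j' z' + IZR m -> j = j' /\ m = 0%Z /\ z = z'.
Proof.
  intros HM H1 Hz Hz' Hj Hj' E. destruct (Nat.le_gt_cases j' j).
  - apply (disj_le u v); auto.
  - destruct (disj_le u v z' z j' j (- m)) as [A [B C]]; auto. { lia. }
    { rewrite opp_IZR. lra. }
    split; auto. split; [lia| auto].
Qed.

Lemma even_par t : Nat.Even q -> Rs q t <> / L.
Proof.
  intros [h Hh] E. destruct (Rs_par q t) as [a [b [Hab Eab]]]. rewrite Eab in E.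
  assert (E2 : L ^ (S a) = L ^ b).
  { assert (Hinv : (/ L) ^ b * L ^ b = 1) by (rewrite <- Rpow_mult_distr, Rinv_l, pow1; lra).
    simpl. replace (L * L ^ a) with (L * L ^ a * ((/ L) ^ b * L ^ b)) by (rewrite Hinv; ring).
    replace (L * L ^ a * ((/ L) ^ b * L ^ b)) with (L * (L ^ a * (/ L) ^ b) * L ^ b) by ring.
    rewrite E. field. lra. }
  assert (S a = b).
  { destruct (Nat.lt_total (S a) b) as [h1|[h1|h1]]; auto.
    - pose proof (Rlt_pow L _ _ HL h1). lra.
    - pose proof (Rlt_pow L _ _ HL h1). lra. }
  lia.
Qed.

Lemma sq_one x : 0 < x -> x * x = 1 -> x = 1.
Proof. intros. nra. Qed.

Lemma b0_fixed : Nat.Even q -> fixd b0.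
Proof.
  intros Hev. destruct (classic (fixd b0)) as [h|Hnf]; auto. exfalso.
  destruct (fix_exists r q P Hrot Hq HrP) as [z0 Hz0].
  destruct (maxint b0 z0 Hz0 Hnf) as [u [v [Huv [HM Hlen]]]].
  pose proof b0lt as Hb0lt. pose proof Lpos as HL0.
  assert (Hsym : u = GG v + 1 /\ v = GG u + 1).
  { pose proof (MaxI_shift _ _ 1 (MaxI_GG u v HM)) as HM2. simpl in HM2.
    assert (GG v < GG b0 < GG u) by (split; apply GG_dec; lra). rewrite GG_b0 in H.
    destruct (MaxI_eq u v (GG v + 1) (GG u + 1) b0 HM HM2); auto; lra. }
  destruct Hsym as [Hu1 Hv1].
  assert (Hnb1 : forall n : Z, ~ (u < b1 + IZR n < v)).
  { intros n Hn. 
    assert (GG v < GG (b1 + IZR n) < GG u) by (split; apply GG_dec; lra).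
    rewrite GG_shift, GG_b1 in H.
    assert (2 * n - 1 = 0)%Z by (apply int_abs_lt1; rewrite minus_IZR, mult_IZR; simpl; lra). lia. }
  assert (Hub1 : b1 <= u).
  { destruct (Rle_or_lt b1 u); auto. exfalso. apply (Hnb1 0%Z). simpl. lra. }
  assert (Hvb1 : v <= b1 + 1).
  { destruct (Rle_or_lt v (b1 + 1)); auto. exfalso. apply (Hnb1 1%Z). simpl. lra. }
  assert (HGG : forall z, u <= z <= b0 -> GG z = v - 1 - (z - u) / L).
  { intros z Hz. unfold GG. rewrite (FF_p1 0 z) by (simpl; lra).
    assert (GG u = - (- b1 + (u - IZR 0 - b1) / L + IZR 0)) by (unfold GG; rewrite (FF_p1 0 u) by (simpl; lra); auto).
    simpl in *. replace (v - 1) with (GG u) by lra. rewrite H. field. lra. }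
  pose proof HM as HM'. destruct HM' as [Huv' [Hfu [Hfv Hint]]].
  assert (Hgs : Ls q v * Rs q u = 1).
  { destruct (rgerm q u) as [d1 [Hd1 H1]]. destruct (lgerm q v) as [d2 [Hd2 H2]].
    set (R := Rs q u) in *. set (Lv := Ls q v) in *. pose proof (Rs_pos q u) as HR. fold R in HR.
    pose proof (Ls_pos q v) as HLv. fold Lv in HLv.
    set (e := Rmin d1 (Rmin ((b0 - u) / (R + 1)) (d2 / (R + 1)))).
    assert (He : 0 < e) by (unfold e; repeat apply Rmin_pos; auto; apply Rdiv_lt_0_compat; lra).
    assert (He1 : e <= d1) by apply Rmin_l.
    assert (He2 : e <= (b0 - u) / (R + 1)) by (eapply Rle_trans; [apply Rmin_r| apply Rmin_l]).
    assert (He3 : e <= d2 / (R + 1)) by (eapply Rle_trans; [apply Rmin_r| apply Rmin_r]).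
    assert (Re1 : R * e <= b0 - u - e).
    { apply (Rmult_le_compat_l (R + 1)) in He2; [|lra].
      replace ((R + 1) * ((b0 - u) / (R + 1))) with (b0 - u) in He2 by (field; lra). nra. }
    assert (Re2 : R * e <= d2).
    { apply (Rmult_le_compat_l (R + 1)) in He3; [|lra].
      replace ((R + 1) * (d2 / (R + 1))) with d2 in He3 by (field; lra). nra. }
    assert (ReL : R * e / L <= R * e) by (apply divL_le; nra).
    assert (ReL0 : 0 <= R * e / L) by (apply div_nonneg; nra).
    pose proof (rev_id q (u + e - IZR P)) as Rv.
    assert (E1 : It q (u + e - IZR P) = u + R * e).
    { replace (u + e - IZR P) with ((u + e) + IZR (- P)) by (rewrite opp_IZR; ring).
      rewrite It_shift, (H1 (u + e)) by lra. unfold fixd in Hfu. rewrite Hfu, opp_IZR. ring. }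
    rewrite E1 in Rv. rewrite (HGG (u + R * e)) in Rv by nra.
    replace (v - 1 - (u + R * e - u) / L) with ((v - R * e / L) + IZR (-1)) in Rv by (simpl; field; lra).
    rewrite It_shift in Rv. rewrite (H2 (v - R * e / L)) in Rv by lra.
    replace (u + e - IZR P) with ((u + e) + IZR (- P)) in Rv by (rewrite opp_IZR; ring).
    rewrite GG_shift, (HGG (u + e)) in Rv by lra. unfold fixd in Hfv. rewrite Hfv in Rv.
    rewrite opp_IZR in Rv. simpl in Rv.
    assert (Lv * (R * e / L) = e / L) by lra.
    apply (Rmult_eq_reg_r (e / L)); [|apply Rgt_not_eq, Rdiv_lt_0_compat; lra].
    rewrite <- H at 2. field. lra. }
  assert (HBb0 : forall z j (n : Z), u < z < v -> (j < q)%nat -> It j z = b0 + IZR n -> j = 0%nat /\ z = b0).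
  { intros z j n Hz Hj E.
    destruct (disj u v z b0 j 0 n HM Hlen Hz ltac:(lra) Hj ltac:(lia) ltac:(unfold It at 2; simpl; exact E)) as [A [B C]].
    split; auto. }
  assert (HBb1 : forall z z' j j' (n n' : Z), u < z < v -> u < z' < v -> (j < q)%nat -> (j' < q)%nat ->
      It j z = b1 + IZR n -> It j' z' = b1 + IZR n' -> j = j' /\ z = z').
  { intros z z' j j' n n' Hz Hz' Hj Hj' E E'.
    destruct (disj u v z z' j j' (n - n') HM Hlen Hz Hz' Hj Hj' ltac:(rewrite E, E', minus_IZR; ring)) as [A [B C]].
    split; auto. }
  assert (Hb0uv : u < b0 < v) by lra.
  assert (Hag : forall x y, u <= x -> x < y -> y <= v ->
     (forall z, x < z < y -> z <> b0 /\ forall j (n : Z), (j < q)%nat -> It j z <> b1 + IZR n) ->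
     Rs q x = Ls q y /\ forall z, x <= z <= y -> It q z = It q x + Rs q x * (z - x)).
  { intros x y Hx Hxy Hy Hnb. apply aff_germ; auto. intros j z Hj Hz [[n E]|[n E]].
    - destruct (HBb0 z j n ltac:(lra) Hj E). destruct (Hnb z Hz) as [A _]. auto.
    - destruct (Hnb z Hz) as [_ A]. apply (A j n Hj E). }
  assert (Hone : forall x y, u <= x -> x < y -> y <= v -> Rs q x = 1 ->
      (forall z, x <= z <= y -> It q z = It q x + Rs q x * (z - x)) -> x = u -> False).
  { intros x y Hx Hxy Hy H1 H2 Hxu. subst x. apply (Hint ((u + y) / 2)); [lra|].
    unfold fixd. rewrite H2 by lra. unfold fixd in Hfu. rewrite Hfu, H1. field. }
  destruct (classic (exists t1 j1 (n1 : Z), u < t1 < v /\ (j1 < q)%nat /\ It j1 t1 = b1 + IZR n1))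
    as [[t1 [j1 [n1 [Ht1 [Hj1 Et1]]]]]|Hnt1].
  - assert (Hj1pos : (0 < j1)%nat \/ t1 <> b0).
    { destruct j1; [right; intro; subst; unfold It in Et1; simpl in Et1; apply (b0b1_notint n1); auto| left; lia]. }
    destruct (Req_dec t1 b0) as [Et|Net].
    +
      subst t1. assert (Hj1p : (0 < j1)%nat) by (destruct Hj1pos; auto; lra).
      assert (Qv : Qs q b0 = 1).
      { rewrite (Qs_one (S j1) q); [| lia |].
        2:{ intros j Hj [[n E]|[n E]].
            - destruct (HBb0 b0 j n Hb0uv ltac:(lia) E). lia.
            - destruct (HBb1 b0 b0 j j1 n n1 Hb0uv Hb0uv ltac:(lia) Hj1 E Et1). lia. }
        simpl. rewrite (Qs_one 1 j1); [| lia |].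
        2:{ intros j Hj [[n E]|[n E]].
            - destruct (HBb0 b0 j n Hb0uv ltac:(lia) E). lia.
            - destruct (HBb1 b0 b0 j j1 n n1 Hb0uv Hb0uv ltac:(lia) Hj1 E Et1). lia. }
        simpl. rewrite Et1. change (It 0 b0) with b0.
        rewrite rF_b0z, lF_b0z, rF_b1, lF_b1. field. lra. }
      assert (Hnb : forall z, u < z < v -> z <> b0 -> z <> b0 /\ forall j (n : Z), (j < q)%nat -> It j z <> b1 + IZR n).
      { intros z Hz Hzb. split; auto. intros j n Hj E. destruct (HBb1 z b0 j j1 n n1 Hz Hb0uv Hj Hj1 E Et1). auto. }
      destruct (Hag u b0) as [A1 A2]; try lra. { intros z Hz. apply Hnb; lra. }
      destruct (Hag b0 v) as [B1 B2]; try lra. { intros z Hz. apply Hnb; lra. }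
      rewrite Rs_Ls_Qs, Qv, Rmult_1_r in B1.
      assert (Rs q u = 1) by (apply sq_one; [apply Rs_pos| rewrite A1 at 1; rewrite B1; exact Hgs]).
      apply (Hone u b0); auto; lra.
    +
      assert (Qt : Rs q t1 = Ls q t1 * (/ L / L)).
      { rewrite Rs_Ls_Qs. f_equal. rewrite (Qs_one (S j1) q); [| lia |].
        2:{ intros j Hj [[n E]|[n E]].
            - destruct (HBb0 t1 j n Ht1 ltac:(lia) E). auto.
            - destruct (HBb1 t1 t1 j j1 n n1 Ht1 Ht1 ltac:(lia) Hj1 E Et1). lia. }
        simpl. rewrite (Qs_one 0 j1); [| lia |].
        2:{ intros j Hj [[n E]|[n E]].
            - destruct (HBb0 t1 j n Ht1 ltac:(lia) E). auto.
            - destruct (HBb1 t1 t1 j j1 n n1 Ht1 Ht1 ltac:(lia) Hj1 E Et1). lia. }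
        simpl. rewrite Et1, rF_b1, lF_b1. field. lra. }
      assert (Qb : Rs q b0 = Ls q b0 * (L * L)).
      { rewrite Rs_Ls_Qs. f_equal. rewrite (Qs_one 1 q); [| lia |].
        2:{ intros j Hj [[n E]|[n E]].
            - destruct (HBb0 b0 j n Hb0uv ltac:(lia) E). lia.
            - destruct (HBb1 b0 t1 j j1 n n1 Hb0uv Ht1 ltac:(lia) Hj1 E Et1). auto. }
        simpl. change (It 0 b0) with b0. rewrite rF_b0z, lF_b0z. field. lra. }
      assert (Hnb : forall z, u < z < v -> z <> b0 -> z <> t1 -> z <> b0 /\ forall j (n : Z), (j < q)%nat -> It j z <> b1 + IZR n).
      { intros z Hz Hzb Hzt. split; auto. intros j n Hj E. destruct (HBb1 z t1 j j1 n n1 Hz Ht1 Hj Hj1 E Et1). auto. }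
      destruct (Rlt_or_le t1 b0) as [Hlt|Hge].
      * destruct (Hag u t1) as [A1 A2]; try lra. { intros z Hz. apply Hnb; lra. }
        destruct (Hag t1 b0) as [B1 B2]; try lra. { intros z Hz. apply Hnb; lra. }
        destruct (Hag b0 v) as [C1 C2]; try lra. { intros z Hz. apply Hnb; lra. }
        assert (Ls q v = Rs q u).
        { rewrite <- C1, Qb, <- B1, Qt, <- A1. field. lra. }
        assert (Rs q u = 1) by (apply sq_one; [apply Rs_pos| rewrite <- H at 1; auto]).
        apply (Hone u t1); auto; lra.
      * destruct (Hag u b0) as [A1 A2]; try lra. { intros z Hz. apply Hnb; lra. }
        destruct (Hag b0 t1) as [B1 B2]; try lra. { intros z Hz. apply Hnb; lra. }
        destruct (Hag t1 v) as [C1 C2]; try lra. { intros z Hz. apply Hnb; lra. }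
        assert (Ls q v = Rs q u).
        { rewrite <- C1, Qt, <- B1, Qb, <- A1. field. lra. }
        assert (Rs q u = 1) by (apply sq_one; [apply Rs_pos| rewrite <- H at 1; auto]).
        apply (Hone u b0); auto; lra.
  -
    assert (Qb : Rs q b0 = Ls q b0 * (L * L)).
    { rewrite Rs_Ls_Qs. f_equal. rewrite (Qs_one 1 q); [| lia |].
      2:{ intros j Hj [[n E]|[n E]].
          - destruct (HBb0 b0 j n Hb0uv ltac:(lia) E). lia.
          - apply Hnt1. exists b0, j, n. split; auto. split; auto; lia. }
      simpl. change (It 0 b0) with b0. rewrite rF_b0z, lF_b0z. field. lra. }
    assert (Hnb : forall z, u < z < v -> z <> b0 -> z <> b0 /\ forall j (n : Z), (j < q)%nat -> It j z <> b1 + IZR n).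
    { intros z Hz Hzb. split; auto. intros j n Hj E. apply Hnt1. exists z, j, n. auto. }
    destruct (Hag u b0) as [A1 A2]; try lra. { intros z Hz. apply Hnb; lra. }
    destruct (Hag b0 v) as [B1 B2]; try lra. { intros z Hz. apply Hnb; lra. }
    assert (Ls q v = Rs q u * (L * L)) by (rewrite <- B1, Qb, <- A1; auto).
    assert (L * Rs q u = 1).
    { apply sq_one; [pose proof (Rs_pos q u); nra|]. rewrite H in Hgs. nra. }
    apply (even_par u Hev). apply (Rmult_eq_reg_l L); [|lra]. rewrite H0. field. lra.
Qed.

Lemma even_orbit : Nat.Even q -> exists h (n : Z), It h b0 = b1 + IZR n /\ (q = h + h)%nat.
Proof.
  intros Hev. pose proof (b0_fixed Hev) as Hf. unfold fixd in Hf.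
  destruct Hev as [h Hh]. exists h.
  set (y := It h b0).
  assert (E1 : It h y = b0 + IZR P) by (unfold y; rewrite <- It_add; replace (h + h)%nat with q by lia; auto).
  pose proof (rev_id h b0) as R. fold y in R. rewrite GG_b0 in R.
  assert (E2 : It h (y + IZR (- P - 1)) = b0 - 1) by (rewrite It_shift, E1, minus_IZR, opp_IZR; simpl; ring).
  rewrite <- E2 in R. apply It_inj in R. unfold GG in R.
  destruct (Fy_int y (P + 1)) as [[n En]|[n En]].
  { rewrite plus_IZR. rewrite minus_IZR, opp_IZR in R. simpl in *. lra. }
  - exfalso. apply (no_small h b0 n); [lia| auto].
  - exists n. split; auto. lia.
Qed.

Lemma even_all : Nat.Even q -> forall x, fixd x.
Proof.
  intros Hev x. pose proof (b0_fixed Hev) as Hf0.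
  destruct (even_orbit Hev) as [h [n1 [Eh _]]].
  assert (Hf1 : fixd b1).
  { assert (fixd (It h b0)) by (apply fixd_It; auto). rewrite Eh in H.
    replace b1 with (b1 + IZR n1 + IZR (- n1)) by (rewrite opp_IZR; ring). apply fixd_shift; auto. }
  destruct (classic (fixd x)) as [h'|Hnx]; auto. exfalso.
  destruct (maxint x b0 Hf0 Hnx) as [u [v [Huv [HM Hlen]]]].
  pose proof HM as [Huv' [Hfu [Hfv Hint]]].
  destruct (aff_germ q u v Huv') as [_ Ha].
  { intros j z Hj Hz [[n E]|[n E]].
    - apply (Hint z Hz). apply (fixd_It_rev j). rewrite E. apply fixd_shift; auto.
    - apply (Hint z Hz). apply (fixd_It_rev j). rewrite E. apply fixd_shift; auto. }
  pose proof (Ha v ltac:(lra)) as Ev. pose proof (Ha x ltac:(lra)) as Ex.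
  unfold fixd in Hfu, Hfv. rewrite Hfu in Ev, Ex. rewrite Hfv in Ev.
  assert (Rs q u = 1).
  { apply (Rmult_eq_reg_r (v - u)); lra. }
  apply Hnx. unfold fixd. rewrite Ex, H. ring.
Qed.

End Abs.

Lemma F_eq theta alpha ell x : F theta alpha ell x = FF (Lam theta alpha) (a0 theta ell) (a1 theta alpha ell) x.
Proof. reflexivity. Qed.

Lemma Zdiv_nat d a : (Z.of_nat d | Z.of_nat a)%Z -> Nat.divide d a.
Proof.
  intros [x Hx]. destruct d as [|d'].
  - simpl in Hx. assert (a = 0%nat) by lia. subst. exists 0%nat. lia.
  - assert (0 <= x)%Z by nia. exists (Z.to_nat x). apply Nat2Z.inj. rewrite Nat2Z.inj_mul, Z2Nat.id; lia.
Qed.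

Lemma Zgcd_nat a b : Nat.gcd a b = 1%nat -> Z.gcd (Z.of_nat a) (Z.of_nat b) = 1%Z.
Proof.
  intros H. set (g := Z.gcd (Z.of_nat a) (Z.of_nat b)).
  assert (Hg0 : (0 <= g)%Z) by apply Z.gcd_nonneg.
  assert (Eg : g = Z.of_nat (Z.to_nat g)) by (rewrite Z2Nat.id; lia).
  pose proof (Z.gcd_divide_l (Z.of_nat a) (Z.of_nat b)) as A. fold g in A.
  pose proof (Z.gcd_divide_r (Z.of_nat a) (Z.of_nat b)) as B. fold g in B.
  rewrite Eg in A, B. apply Zdiv_nat in A. apply Zdiv_nat in B.
  pose proof (Nat.gcd_greatest _ _ _ A B) as C. rewrite H in C. apply Nat.divide_1_r in C.
  rewrite Eg, C. reflexivity.
Qed.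

Lemma Fiter_It theta alpha ell n x :
  Fiter theta alpha ell n x = It (Lam theta alpha) (a0 theta ell) (a1 theta alpha ell) n x.
Proof. reflexivity. Qed.

Lemma params_ok theta alpha ell : admissible theta alpha ell ->
  1 < Lam theta alpha /\ a1 theta alpha ell < a0 theta ell /\
  a0 theta ell - a1 theta alpha ell = Lam theta alpha * (1 - a0 theta ell + a1 theta alpha ell).
Proof.
  intros [Hl [Ha [Hat [Htp _]]]].
  assert (Hc1 : 0 < cos theta) by (apply cos_gt_0; lra).
  assert (Hc2 : 0 < cos alpha) by (apply cos_gt_0; lra).
  assert (Hs : 0 < tan alpha) by (apply tan_gt_0; lra).
  assert (Hst : tan alpha < tan theta) by (apply tan_increasing; lra).
  set (t := tan theta) in *. set (s := tan alpha) in *.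
  assert (Et : sin theta = t * cos theta) by (unfold t, tan; field; lra).
  assert (Es : sin alpha = s * cos alpha) by (unfold s, tan; field; lra).
  assert (EL : Lam theta alpha = (t + s) / (t - s)).
  { unfold Lam. rewrite sin_plus, sin_minus, Et, Es. field. split; [lra|].
    intro H. assert (cos theta * cos alpha * (t - s) = 0) by lra.
    assert (0 < cos theta * cos alpha * (t - s)) by (apply Rmult_lt_0_compat; [nra| lra]). lra. }
  assert (Ht0 : 0 < t) by lra.
  unfold a0, a1. fold t s. rewrite EL. split; [|split].
  - apply (Rmult_lt_reg_r (t - s)); [lra|]. unfold Rdiv. rewrite Rmult_assoc, Rinv_l by lra. lra.
  - apply (Rmult_lt_reg_r (2 * t)); [lra|]. unfold Rdiv.
    rewrite !Rmult_assoc, Rinv_l by lra. lra.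
  - field. lra.
Qed.

Theorem proposition3p1 (theta alpha ell : R) (p q : nat) :
  admissible theta alpha ell ->
  ((0 < p)%nat /\ (0 < q)%nat /\ Nat.gcd p q = 1%nat \/ (p = 0%nat /\ q = 1%nat)) ->
  rotation_number theta alpha ell (INR p / INR q) ->
  (Nat.Even q ->
     (forall x, same_pt (Fiter theta alpha ell q x) x) /\
     (forall x (k : nat), (0 < k < q)%nat -> ~ same_pt (Fiter theta alpha ell k x) x) /\
     (exists k : nat, same_pt (Fiter theta alpha ell k (a0 theta ell)) (a1 theta alpha ell))) /\
  (Nat.Odd q ->
     (forall u v, u < v ->
        exists x, u < x < v /\ ~ same_pt (Fiter theta alpha ell q x) x) /\
     ~ ((exists n : nat, (0 < n)%nat /\
           same_pt (Fiter theta alpha ell n (a0 theta ell)) (a0 theta ell)) /\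
        (exists k : nat, same_pt (Fiter theta alpha ell k (a0 theta ell)) (a1 theta alpha ell)))).
Proof.
  intros Hadm Hpq [r0 [Hcv Hrho]].
  destruct (params_ok theta alpha ell Hadm) as [HL [Hb Hrel]].
  set (L := Lam theta alpha) in *. set (b0 := a0 theta ell) in *. set (b1 := a1 theta alpha ell) in *.
  assert (Hrot : rot L b0 b1 r0) by exact Hcv.
  assert (Hq : (0 < q)%nat) by (destruct Hpq as [[_ [h _]]|[_ h]]; lia).
  assert (Hq0 : 0 < INR q) by (apply lt_0_INR; lia).
  destruct (fl_int r0) as [N HN].
  set (P := (Z.of_nat p + N * Z.of_nat q)%Z).
  assert (HrP : r0 = IZR P / INR q).
  { unfold P. rewrite plus_IZR, mult_IZR, <- !INR_IZR_INZ. rewrite HN in Hrho.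
    apply (Rmult_eq_reg_r (INR q)); [|lra]. unfold Rdiv in *.
    replace ((INR p + IZR N * INR q) * / INR q * INR q) with (INR p + IZR N * INR q) by (field; lra).
    assert (INR p * / INR q * INR q = (r0 - IZR N) * INR q) by (rewrite Hrho; auto).
    replace (INR p * / INR q * INR q) with (INR p) in H by (field; lra). nra. }
  assert (HNT : forall (m : Z) (k : nat), (0 < k)%nat -> r0 = IZR m / INR k -> Nat.divide q k).
  { intros m k Hk E. assert (Hk0 : 0 < INR k) by (apply lt_0_INR; lia).
    rewrite HrP in E.
    assert (E2 : IZR (P * Z.of_nat k) = IZR (m * Z.of_nat q)).
    { rewrite !mult_IZR, <- !INR_IZR_INZ.
      apply (Rmult_eq_reg_r (/ (INR q * INR k))); [|apply Rinv_neq_0_compat; nra].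
      replace (IZR P * INR k * / (INR q * INR k)) with (IZR P / INR q) by (field; lra).
      rewrite E. field. lra. }
    apply eq_IZR in E2.
    assert (Hd : (Z.of_nat q | P * Z.of_nat k)%Z) by (exists m; lia).
    assert (Hg : Z.gcd (Z.of_nat q) P = 1%Z).
    { unfold P. rewrite Z.gcd_add_mult_diag_r.
      destruct Hpq as [[_ [_ Hg]]|[-> ->]].
      - apply Zgcd_nat. rewrite Nat.gcd_comm. exact Hg.
      - reflexivity. }
    apply Zdiv_nat. apply (Z.gauss _ _ _ Hd Hg). }
  split.
  - intros Hev. split; [|split].
    + intros x. rewrite Fiter_It. fold L b0 b1.
      pose proof (even_all L b0 b1 HL Hb Hrel r0 q P Hrot Hq HrP HNT Hev x) as Hx.
      unfold fixd in Hx. exists P. rewrite Hx. ring.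
    + intros x k Hk [m Hm]. rewrite Fiter_It in Hm. fold L b0 b1 in Hm.
      apply (no_small L b0 b1 HL Hb Hrel r0 q Hrot Hq HNT k x m Hk). lra.
    + destruct (even_orbit L b0 b1 HL Hb Hrel r0 q P Hrot Hq HrP HNT Hev) as [h [n [Eh _]]].
      exists h. exists n. rewrite Fiter_It. fold L b0 b1. rewrite Eh. ring.
  - intros Hodd. split.
    + intros u v Huv. destruct (odd_part1 L b0 b1 HL Hb Hrel q u v Hodd Huv) as [x [Hx1 Hx2]].
      exists x. split; [exact Hx1| rewrite Fiter_It; exact Hx2].
    + intros [_ [k [j Hk]]]. apply (odd_part2 L b0 b1 HL Hb Hrel r0 q P Hrot Hq HrP HNT Hodd).
      exists k, j. rewrite Fiter_It in Hk. fold L b0 b1 in Hk. lra.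
Qed.
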